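(* Let $X\subseteq W$ be a block subspace, $(y_0,y_1,y_2,\dots)$ a block sequence in $W$, $\alpha<\omega_1$ and $K\ge1$. Assume that II has a strategy in $F^{\omega\cdot\alpha}_X$ to play $(x_0,\dots,x_k)$ such that $(x_0,\dots,x_k)\sim_K(y_0,\dots,y_k)$. Then for every block sequence $(z_n)$ in $[y_n]$, II has a strategy in $F^\alpha_X$ to play $(v_0,\dots,v_k)$ such that $(v_0,\dots,v_k)\sim_K(z_0,\dots,z_k)$.
   Context: Let $\mathcal W$ be a real Banach space with Schauder basis $(e_n)$. Fix a countable subfield $\mathfrak F\subseteq\mathbb R$ such that $\|\sum_{n\le m}a_ne_n\|\in\mathfrak F$ whenever all $a_n\in\mathfrak F$, and let $W$ be the $\mathfrak F$-vector space of finite $\mathfrak F$-linear combinations of the $e_n$, with the norm of $\mathcal W$; subspaces and spans $[\cdot]$ are $\mathfrak F$-linear in $W$. For nonzero $x=\sum a_ne_n$, ${\rm supp}(x)=\{n:a_n\neq0\}$, and $x<y$ means $\max{\rm supp}(x)<\min{\rm supp}(y)$. A block sequence is a sequence of nonzero vectors $x_0<x_1<\dots$; a block subspace is the span of an infinite block sequence. $[e_i]_{i>n}$ is the span of $\{e_i:i>n\}$. $(x_i)_{i\le k}\sim_K(y_i)_{i\le k}$ means $\frac1K\|\sum a_ix_i\|\le\|\sum a_iy_i\|\le K\|\sum a_ix_i\|$ for all real $a_i$. $\omega\cdot\alpha$ is ordinal multiplication. Game $F^\gamma_X$ ($\gamma$ countable ordinal): in rounds $l=0,1,\dots$, I plays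 an integer $n_l$ and an ordinal $\xi_l$ ($\xi_0<\gamma$, $\xi_l<\xi_{l-1}$); II responds with a finite-dimensional $F_l\subseteq X\cap[e_i]_{i>n_l}$ and a nonzero $x_l\in F_0+\dots+F_l$; it ends after II's response to $\xi_k=0$ (immediately if $\gamma=0$), with outcome $(x_0,\dots,x_k)$. ''II has a strategy to play ... such that P'' means II can ensure the outcome satisfies P. *)

(* Defs.v *)
From HB Require Import structures.
From mathcomp Require Import all_boot all_order all_algebra.
From mathcomp Require Import all_classical all_reals all_analysis.
Set Implicit Arguments. Unset Strict Implicit. Unset Printing Implicit Defensive.
Import Order.TTheory GRing.Theory Num.Theory.
Import numFieldNormedType.Exports.
Local Open Scope classical_set_scope.
Local Open Scope ring_scope.

Section Defs.
Variables (R : realType) (V : completeNormedModType R).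

Definition expansion (e : nat -> V) (a : nat -> R) (x : V) : Prop :=
  (fun m : nat => \sum_(i < m) a i *: e i) @ \oo --> x.

Definition schauder_basis (e : nat -> V) : Prop :=
  forall x : V, exists! a : nat -> R, expansion e a x.

Definition is_subfield (F : set R) : Prop :=
  [/\ F 0, F 1, (forall a b, F a -> F b -> F (a + b)),
      (forall a, F a -> F (- a)) &
      (forall a b, F a -> F b -> F (a * b))] /\
  (forall a, F a -> a != 0 -> F a^-1).

Definition norm_in_field (F : set R) (e : nat -> V) : Prop :=
  forall (m : nat) (a : nat -> R), (forall n, F (a n)) ->
    F `|\sum_(n < m.+1) a n *: e n|.

Definition spanF (F : set R) (S : set V) : set V :=
  [set v | exists (k : nat) (c : nat -> R) (s : nat -> V),
     (forall i, (i < k)%N -> F (c i) /\ S (s i)) /\ v = \sum_(i < k) c i *: s i].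

Definition in_W (F : set R) (e : nat -> V) (x : V) : Prop := spanF F (range e) x.

Definition in_supp (e : nat -> V) (x : V) (n : nat) : Prop :=
  exists a, expansion e a x /\ a n != 0.

Definition block_lt (e : nat -> V) (x y : V) : Prop :=
  forall i j, in_supp e x i -> in_supp e y j -> (i < j)%N.

Definition block_seq (F : set R) (e : nat -> V) (x : nat -> V) : Prop :=
  forall n, [/\ x n != 0, in_W F e (x n) & block_lt e (x n) (x n.+1)].

Definition equivK (K : R) (xs ys : seq V) : Prop :=
  size xs = size ys /\
  forall a : nat -> R,
    K^-1 * `|\sum_(i < size xs) a i *: xs`_i| <= `|\sum_(i < size ys) a i *: ys`_i|
    /\ `|\sum_(i < size ys) a i *: ys`_i| <= K * `|\sum_(i < size xs) a i *: xs`_i|.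

(** Countable ordinals are represented by countable strict well-orders. *)
Definition countable_wellorder (T : Type) (lt : T -> T -> Prop) : Prop :=
  [/\ (forall x, ~ lt x x), (forall x y z, lt x y -> lt y z -> lt x z),
      (forall x y, x = y \/ lt x y \/ lt y x), well_founded lt
    & exists f : T -> nat, injective f].

(** order type omega * alpha : alpha copies of omega, ordered lexicographically
    with the alpha-component most significant *)
Definition omega_mul_lt (T : Type) (lt : T -> T -> Prop) (p q : T * nat) : Prop :=
  lt p.1 q.1 \/ (p.1 = q.1 /\ (p.2 < q.2)%N).

Definition is_zero (T : Type) (lt : T -> T -> Prop) (xi : T) : Prop :=
  forall eta, ~ lt eta xi.

(** a complete sequence of moves (n_0,xi_0),...,(n_k,xi_k) of player I in F^gamma:
    strictly decreasing ordinals, the game ends exactly when xi_k = 0 *)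
Definition complete_play (T : Type) (lt : T -> T -> Prop) (ms : seq (nat * T)) : Prop :=
  (forall ms1 p q ms2, ms = ms1 ++ p :: q :: ms2 -> lt q.2 p.2 /\ ~ is_zero lt p.2)
  /\ exists ms1 p, ms = rcons ms1 p /\ is_zero lt p.2.

(** A strategy for II maps the moves of I so far to II's answer
    (a finite list of generators of F_l, the vector x_l). *)
Definition strategyII (T : Type) := seq (nat * T) -> seq V * V.

Definition outcome (T : Type) (sigma : strategyII T) (ms : seq (nat * T)) : seq V :=
  [seq (sigma (take i.+1 ms)).2 | i <- iota 0 (size ms)].

Definition legalII (F : set R) (e : nat -> V) (X : set V) (T : Type)
    (sigma : strategyII T) (ms : seq (nat * T)) : Prop :=
  forall ms1 p ms2, ms = ms1 ++ p :: ms2 ->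
    let j := size ms1 in
    let r := sigma (take j.+1 ms) in
    [/\ spanF F [set g | g \in r.1] `<=` X `&` spanF F [set e i | i in [set i | (p.1 < i)%N]],
        r.2 != 0
      & spanF F [set g | g \in flatten [seq (sigma (take i.+1 ms)).1 | i <- iota 0 j.+1]] r.2].

Definition II_has_strategy (F : set R) (e : nat -> V) (X : set V) (T : Type)
    (lt : T -> T -> Prop) (P : seq V -> Prop) : Prop :=
  exists sigma : strategyII T,
    (~ inhabited T -> P [::]) /\
    forall ms, complete_play lt ms -> legalII F e X sigma ms /\ P (outcome sigma ms).

End Defs.

(* Main.v *)
Require Import Defs.
From HB Require Import structures.
From mathcomp Require Import all_boot all_order all_algebra.
From mathcomp Require Import all_classical all_reals all_analysis.
From mathcomp Require Import zify.
Set Implicit Arguments. Unset Strict Implicit. Unset Printing Implicit Defensive.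
Import Order.TTheory GRing.Theory Num.Theory.
Import numFieldNormedType.Exports.
Local Open Scope classical_set_scope.
Local Open Scope ring_scope.

Section Comb.
Variable d : nat -> nat.
Hypothesis dpos : forall l, (0 < d l)%N.

Definition SS l := (\sum_(m < l) d m)%N.

Lemma SS_S l : SS l.+1 = (SS l + d l)%N.
Proof. by rewrite /SS big_ord_recr. Qed.

Lemma SS_mono m n : (m <= n)%N -> (SS m <= SS n)%N.
Proof.
move=> /subnK <-; elim: (n - m)%N => [|k IH]; first by rewrite add0n.
rewrite addSn SS_S; lia.
Qed.

Lemma SS_ge l : (l <= SS l)%N.
Proof. elim: l => [|l IH]; first by []. rewrite SS_S; have := dpos l; lia. Qed.

Lemma SS0 : SS 0 = 0%N.
Proof. by rewrite /SS big_ord0. Qed.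

Definition rnd j := find (fun l => (j < SS l.+1)%N) (iota 0 j.+1).

Lemma rnd_spec j : (SS (rnd j) <= j < SS (rnd j).+1)%N.
Proof.
have hh : has (fun l => (j < SS l.+1)%N) (iota 0 j.+1).
  apply/hasP; exists j; first by rewrite mem_iota; lia.
  by have := SS_ge j.+1; lia.
have hlt : (rnd j < j.+1)%N by rewrite /rnd -[X in (_ < X)%N](size_iota 0 j.+1) -has_find.
have := nth_find 0%N hh; rewrite -/(rnd j) nth_iota // add0n => ->; rewrite andbT.
case E: (rnd j) => [|r]; first by rewrite SS0.
have := before_find 0%N (_ : (r < rnd j)%N); rewrite E => /(_ (ltnSn r)).
rewrite nth_iota; last by lia.
by rewrite add0n; lia.
Qed.

Lemma rnd_uniq j l : (SS l <= j < SS l.+1)%N -> rnd j = l.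
Proof.
move=> hl; have hr := rnd_spec j.
case: (ltngtP (rnd j) l) => // h.
- have := SS_mono h; lia.
- have := SS_mono h; lia.
Qed.

Lemma rnd_lt j L : (j < SS L)%N -> (rnd j < L)%N.
Proof.
move=> h; have hr := rnd_spec j; case: (leqP L (rnd j)) => // h2.
have := SS_mono h2; lia.
Qed.

Variable T : Type.
Variable d0 : nat * T.

Definition simf (ms : seq (nat * T)) (j : nat) : nat * (T * nat) :=
  let p := nth d0 ms (rnd j) in (p.1, (p.2, (SS (rnd j).+1 - j.+1)%N)).

Definition sim ms := mkseq (simf ms) (SS (size ms)).

Lemma size_sim ms : size (sim ms) = SS (size ms).
Proof. by rewrite size_mkseq. Qed.

Lemma nth_sim dd ms j : (j < SS (size ms))%N -> nth dd (sim ms) j = simf ms j.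
Proof. by move=> h; rewrite nth_mkseq. Qed.

Lemma take_sim ms l : (l <= size ms)%N -> take (SS l) (sim ms) = sim (take l ms).
Proof.
move=> hl; rewrite /sim size_takel // /mkseq -map_take take_iota.
rewrite (minn_idPl (SS_mono hl)).
apply/eq_in_map => j; rewrite mem_iota add0n => /andP[_ hj].
by rewrite /simf nth_take //; apply: rnd_lt.
Qed.

End Comb.


Lemma consecP (A : Type) (dd : A) (Q : A -> A -> Prop) (s : seq A) :
  (forall s1 p q s2, s = s1 ++ p :: q :: s2 -> Q p q) <->
  (forall i, (i.+1 < size s)%N -> Q (nth dd s i) (nth dd s i.+1)).
Proof.
split.
- move=> H i hi; apply: (H (take i s) _ _ (drop i.+2 s)).
  rewrite -{1}(cat_take_drop i s) (drop_nth dd) ?(drop_nth dd (n:=i.+1)) //; lia.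
- move=> H s1 p q s2 E; have := H (size s1); rewrite E size_cat /= !nth_cat ltnn subnn.
  rewrite (_ : ((size s1).+1 < size s1)%N = false); last lia.
  rewrite subSnn /=; apply; lia.
Qed.

Lemma lastP' (A : Type) (dd : A) (Z : A -> Prop) (s : seq A) :
  (exists s1 p, s = rcons s1 p /\ Z p) <-> ((0 < size s)%N /\ Z (nth dd s (size s).-1)).
Proof.
split.
- by move=> [s1 [p [-> hp]]]; rewrite nth_last last_rcons size_rcons.
- case/lastP: s => [|s1 x]; first by case.
  by rewrite nth_last last_rcons => -[_ h]; exists s1, x.
Qed.

Lemma legalP (A : Type) (dd : A) (Q : nat -> A -> Prop) (s : seq A) :
  (forall s1 p s2, s = s1 ++ p :: s2 -> Q (size s1) p) <->
  (forall j, (j < size s)%N -> Q j (nth dd s j)).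
Proof.
split.
- move=> H j hj; have := H (take j s) (nth dd s j) (drop j.+1 s).
  rewrite size_takel; last lia.
  by apply; rewrite -{1}(cat_take_drop j s) (drop_nth dd).
- move=> H s1 p s2 E; have := H (size s1); rewrite E nth_cat ltnn subnn /=.
  by apply; rewrite size_cat /=; lia.
Qed.

Section Span.
Variables (R : realType) (V : completeNormedModType R) (F : set R).
Hypothesis hF : is_subfield F.

Lemma F0 : F 0. Proof. by case: hF => [[h0 h1 hA hN hM] _]. Qed.
Lemma F1 : F 1. Proof. by case: hF => [[h0 h1 hA hN hM] _]; auto. Qed.
Lemma FM a b : F a -> F b -> F (a * b). Proof. by case: hF => [[h0 h1 hA hN hM] _]; auto. Qed.

Lemma spanF_mono (A B : set V) : A `<=` B -> spanF F A `<=` spanF F B.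
Proof.
move=> AB v [k [c [s [h ->]]]]; exists k, c, s; split => // i hi.
by have [? ?] := h i hi; split => //; apply: AB.
Qed.

Lemma spanF_in (A : set V) v : A v -> spanF F A v.
Proof.
move=> hv; exists 1%N, (fun _ => 1), (fun _ => v); split.
  by move=> i _; split => //; apply: F1.
by rewrite big_ord1 scale1r.
Qed.

Lemma spanF_0 (A : set V) : spanF F A 0.
Proof. by exists 0%N, (fun _ => 0), (fun _ => 0); split => //; rewrite big_ord0. Qed.

Lemma spanF_add (A : set V) u v : spanF F A u -> spanF F A v -> spanF F A (u + v).
Proof.
move=> [k1 [c1 [s1 [h1 ->]]]] [k2 [c2 [s2 [h2 ->]]]].
exists (k1 + k2)%N, (fun i => if (i < k1)%N then c1 i else c2 (i - k1)%N),
  (fun i => if (i < k1)%N then s1 i else s2 (i - k1)%N); split.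
  move=> i hi; case: ifP => hik; first by apply: h1.
  by apply: h2; lia.
rewrite big_split_ord /=; congr (_ + _); apply: eq_bigr => i _.
  by rewrite ltn_ord.
by rewrite ltnNge leq_addr /= addKn.
Qed.

Lemma spanF_scale (A : set V) a v : F a -> spanF F A v -> spanF F A (a *: v).
Proof.
move=> ha [k [c [s [h ->]]]]; exists k, (fun i => a * c i), s; split.
  by move=> i hi; have [? ?] := h i hi; split => //; apply: FM.
by rewrite scaler_sumr; apply: eq_bigr => i _; rewrite scalerA.
Qed.

Lemma spanF_sum (A : set V) k (c : nat -> R) (w : nat -> V) :
  (forall i, (i < k)%N -> F (c i) /\ spanF F A (w i)) ->
  spanF F A (\sum_(i < k) c i *: w i).
Proof.
elim: k => [|k IH] h; first by rewrite big_ord0; apply: spanF_0.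
rewrite big_ord_recr /=; apply: spanF_add.
  by apply: IH => i hi; apply: h; lia.
by have [? ?] := h k (ltnSn k); apply: spanF_scale.
Qed.

Lemma spanF_idem (A : set V) : spanF F (spanF F A) `<=` spanF F A.
Proof. by move=> v [k [c [s [h ->]]]]; apply: spanF_sum. Qed.

Lemma spanF_sub (A B : set V) : A `<=` spanF F B -> spanF F A `<=` spanF F B.
Proof. by move=> h v /(spanF_mono h) /spanF_idem. Qed.

End Span.

Section Regroup.
Variables (R : realType) (V : completeNormedModType R).

Lemma regroup1 (w : nat -> V) N k (c : nat -> R) (s : nat -> nat) :
  (forall i, (i < k)%N -> (s i < N)%N) ->
  \sum_(i < k) c i *: w (s i) = \sum_(j < N) (\sum_(i < k | s i == j) c i) *: w j.
Proof.
move=> hs.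
transitivity (\sum_(j < N) \sum_(i < k) (if s i == j then c i *: w (s i) else 0)).
  rewrite exchange_big /=; apply: eq_bigr => i _.
  rewrite (bigD1 (Ordinal (hs i (ltn_ord i)))) //= eqxx big1 ?addr0 // => j hj.
  case: ifP => // /eqP E; case/eqP: hj; exact: val_inj.
apply: eq_bigr => j _; rewrite scaler_suml [RHS]big_mkcond /=.
apply: eq_bigr => i _.
by case: ifP => // /eqP ->; rewrite ?scale0r.
Qed.

Lemma regroup (w : nat -> V) N L (b : nat -> R) (k : nat -> nat) (c : nat -> nat -> R)
    (s : nat -> nat -> nat) :
  (forall l i, (l < L)%N -> (i < k l)%N -> (s l i < N)%N) ->
  \sum_(l < L) b l *: \sum_(i < k l) c l i *: w (s l i) =
  \sum_(j < N) (\sum_(l < L) b l * \sum_(i < k l | s l i == j) c l i) *: w j.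
Proof.
move=> hs.
under eq_bigr => l _ do rewrite (@regroup1 w N (k l) (c l) (s l) (hs l^~ (ltn_ord l))).
under eq_bigr => l _ do rewrite scaler_sumr.
rewrite exchange_big /=; apply: eq_bigr => j _.
by rewrite scaler_suml; apply: eq_bigr => l _; rewrite scalerA.
Qed.

Lemma sum_ind (f : nat -> V) L l : (l < L)%N ->
  \sum_(m < L) (((m : nat) == l)%:R : R) *: f m = f l.
Proof.
move=> hl; rewrite (bigD1 (Ordinal hl)) //= eqxx scale1r big1 ?addr0 // => m hm.
rewrite (_ : (m : nat) == l = false) ?scale0r //; apply/negbTE.
by apply: contra hm => /eqP h; apply/eqP; exact: val_inj.
Qed.

Lemma equivK_nil K : equivK K ([::] : seq V) [::].
Proof. rewrite /equivK; split => // a; rewrite /= !big_ord0 normr0 !mulr0; split; exact: lexx. Qed.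

End Regroup.


Section Main.
Variables (R : realType) (V : completeNormedModType R).

Definition sigReal (dl : nat -> nat) (T : Type) (d0 : nat * T)
   (sigS : strategyII V (T * nat)) (k : nat -> nat) (c : nat -> nat -> R)
   (s : nat -> nat -> nat) : strategyII V T :=
  fun p => let l := (size p).-1 in let sp := sim dl d0 p in
  (flatten [seq (sigS (take j.+1 sp)).1 | j <- iota (SS dl l) (dl l)],
   \sum_(i < k l) c l i *: (sigS (take (s l i).+1 sp)).2).

Lemma sigReal_take dl (dpos : forall l, (0 < dl l)%N) T (d0 : nat * T) sigS k c s ms l :
  (l < size ms)%N -> (forall i, (i < k l)%N -> (s l i < dl l)%N) ->
  sigReal dl d0 sigS k c s (take l.+1 ms) =
  (flatten [seq (sigS (take j.+1 (sim dl d0 ms))).1 | j <- iota (SS dl l) (dl l)],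
   \sum_(i < k l) c l i *: (sigS (take (s l i).+1 (sim dl d0 ms))).2).
Proof.
move=> hl hs; rewrite /sigReal size_takel //= -(take_sim dpos) //.
congr pair.
  congr flatten; apply/eq_in_map => j; rewrite mem_iota => /andP[_ hj].
  by rewrite -take_min (minn_idPl _) // SS_S; lia.
apply: eq_bigr => i _; rewrite -take_min (minn_idPl _) // SS_S.
by have := hs i (ltn_ord i); lia.
Qed.

Lemma complete_sim T (ltT : T -> T -> Prop) dl (dpos : forall l, (0 < dl l)%N) t0 ms :
  complete_play ltT ms -> complete_play (omega_mul_lt ltT) (sim dl (0%N, t0) ms).
Proof.
move=> [hc hl].
have hc' := (consecP (0%N, t0) _ ms).1 hc.
have [hL hz] := (lastP' (0%N, t0) _ ms).1 hl.
split.
- apply/(consecP (0%N, (t0, 0%N))) => i; rewrite size_sim => hi.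
  rewrite !nth_sim //; last lia.
  rewrite /simf.
  have hr := rnd_spec dpos i.
  set l := rnd dl i in hr *.
  case: (ltnP i.+1 (SS dl l.+1)) => h.
  + rewrite (@rnd_uniq _ dpos i.+1 l); last lia.
    split; first by right; split => //=; lia.
    move=> hz0; apply: (hz0 ((nth (0%N, t0) ms l).2, 0%N)); right; split => //=; lia.
  + have hl1 : rnd dl i.+1 = l.+1.
      apply: rnd_uniq => //; rewrite (SS_S dl l.+1); have := dpos l.+1; lia.
    have hl2 : (l.+1 < size ms)%N by rewrite -hl1; apply: rnd_lt.
    rewrite hl1; have [hlt hnz] := hc' l hl2.
    split; first by left.
    move=> hz0; apply: hnz => eta heta; apply: (hz0 (eta, 0%N)); by left.
- apply/(lastP' (0%N, (t0, 0%N))); rewrite size_sim.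
  case E: (size ms) hL hz => [|L'] // _ hz /=.
  have hd := dpos L'.
  have hpos : (0 < SS dl L'.+1)%N by rewrite SS_S; lia.
  split => //; rewrite nth_sim ?E; last lia.
  rewrite /simf (@rnd_uniq _ dpos _ L'); last by rewrite SS_S; lia.
  move=> [eta m] [/= h|[/= _ h]]; first exact: (hz eta h).
  lia.
Qed.

End Main.


Theorem lemma4p5 (R : realType) (V : completeNormedModType R) (e : nat -> V)
    (F : set R)
    (he : schauder_basis e) (hF : is_subfield F) (hFc : countable F)
    (hFn : norm_in_field F e)
    (X : set V) (xb : nat -> V) (hxb : block_seq F e xb) (hX : X = spanF F (range xb))
    (y : nat -> V) (hy : block_seq F e y)
    (T : Type) (ltT : T -> T -> Prop) (halpha : countable_wellorder ltT)
    (K : R) (hK : 1 <= K)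
    (hstrat : II_has_strategy F e X (omega_mul_lt ltT)
                (fun xs => equivK K xs (mkseq y (size xs)))) :
  forall z : nat -> V, block_seq F e z -> (forall n, spanF F (range y) (z n)) ->
    II_has_strategy F e X ltT (fun vs => equivK K vs (mkseq z (size vs))).
Proof.
move=> z hz hzy.
case: (pselect (inhabited T)) => [[t0]|nT]; last first.
  exists (fun _ => ([::], 0)); split; first by move=> _; exact: equivK_nil.
  by move=> ms [_ [ms1 [p _]]]; exfalso; apply: nT; constructor; exact: p.2.
have rep : forall n, exists t : nat * (nat -> R) * (nat -> nat),
   (forall i, (i < t.1.1)%N -> F (t.1.2 i)) /\
   z n = \sum_(i < t.1.1) t.1.2 i *: y (t.2 i).
  move=> n; have [kk [cc [ss [h E]]]] := hzy n.
  have : forall i, exists m, (i < kk)%N -> y m = ss i.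
    move=> i; case: (ltnP i kk) => hi; last by exists 0%N => h'; lia.
    by have [_ [m _ hm]] := h i hi; exists m.
  move=> /choice [f hf].
  exists (kk, cc, f); split => /= [i hi|]; first by have [] := h i hi.
  by rewrite E; apply: eq_bigr => i _; rewrite hf.
have [t ht] := choice rep.
pose k := fun n => (t n).1.1; pose c := fun n => (t n).1.2; pose s := fun n => (t n).2.
have hc : forall n i, (i < k n)%N -> F (c n i) := fun n => (ht n).1.
have hzr : forall n, z n = \sum_(i < k n) c n i *: y (s n i) := fun n => (ht n).2.
pose dl := fun l => (\max_(i < k l) s l i).+1.
have dpos : forall l, (0 < dl l)%N by [].
have hs : forall l i, (i < k l)%N -> (s l i < dl l)%N.
  move=> l i hi; rewrite /dl ltnS.
  exact: (leq_bigmax (F := fun i : 'I_(k l) => s l i) (Ordinal hi)).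
case: hstrat => sigS [_ hS].
exists (sigReal dl (0%N, t0) sigS k c s); split.
  by move=> h; exfalso; apply: h; constructor.
move=> ms hms.
have hsim := complete_sim dpos t0 hms.
have [hlegS heqS] := hS _ hsim.
set sm := sim dl (0%N, t0) ms in hlegS heqS.
set L := size ms.
pose Xj j := sigS (take j.+1 sm).
have hR : forall l, (l < L)%N -> sigReal dl (0%N, t0) sigS k c s (take l.+1 ms) =
    (flatten [seq (Xj j).1 | j <- iota (SS dl l) (dl l)],
     \sum_(i < k l) c l i *: (Xj (s l i)).2).
  by move=> l hl; apply: sigReal_take => //; apply: hs.
have hR1 : forall l, (l < L)%N -> (sigReal dl (0%N, t0) sigS k c s (take l.+1 ms)).1 =
    flatten [seq (Xj j).1 | j <- iota (SS dl l) (dl l)] by move=> l hl; rewrite hR.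
have hR2 : forall l, (l < L)%N -> (sigReal dl (0%N, t0) sigS k c s (take l.+1 ms)).2 =
     \sum_(i < k l) c l i *: (Xj (s l i)).2 by move=> l hl; rewrite hR.
have hsz : size (outcome sigS sm) = SS dl L by rewrite size_map size_iota size_sim.
have hxo : forall j, (j < SS dl L)%N -> nth 0 (outcome sigS sm) j = (Xj j).2.
  move=> j hj; rewrite /outcome (nth_map 0%N); last by rewrite size_iota size_sim.
  by rewrite nth_iota // size_sim.
have key : forall A : nat -> R,
    K^-1 * `|\sum_(j < SS dl L) A j *: (Xj j).2| <= `|\sum_(j < SS dl L) A j *: y j| /\
    `|\sum_(j < SS dl L) A j *: y j| <= K * `|\sum_(j < SS dl L) A j *: (Xj j).2|.
  move=> A; have [_ h] := heqS; have := h A; rewrite size_mkseq hsz.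
  have e1 : \sum_(j < SS dl L) A j *: (outcome sigS sm)`_j =
      \sum_(j < SS dl L) A j *: (Xj j).2 by apply: eq_bigr => j _; rewrite hxo.
  have e2 : \sum_(j < SS dl L) A j *: (mkseq y (SS dl L))`_j =
      \sum_(j < SS dl L) A j *: y j by apply: eq_bigr => j _; rewrite nth_mkseq.
  by rewrite e1 e2.
have hsN : forall l i, (l < L)%N -> (i < k l)%N -> (s l i < SS dl L)%N.
  move=> l i hl hi; have := hs l i hi; have := SS_mono dl hl; rewrite SS_S; lia.
pose Acoef (b : nat -> R) j := \sum_(l < L) b l * \sum_(i < k l | s l i == j) c l i.
have hreg : forall b : nat -> R,
    \sum_(l < L) b l *: (sigReal dl (0%N, t0) sigS k c s (take l.+1 ms)).2 =
      \sum_(j < SS dl L) Acoef b j *: (Xj j).2 /\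
    \sum_(l < L) b l *: z l = \sum_(j < SS dl L) Acoef b j *: y j.
  move=> b; split.
  - rewrite -(regroup (fun j => (Xj j).2) b c hsN); apply: eq_bigr => l _.
    by rewrite hR.
  - rewrite -(regroup y b c hsN); apply: eq_bigr => l _; by rewrite hzr.
have hso : size (outcome (sigReal dl (0%N, t0) sigS k c s) ms) = L.
  by rewrite size_map size_iota.
split; last first.
  split; first by rewrite size_mkseq.
  move=> a; rewrite size_mkseq hso.
  have e1 : \sum_(l < L) a l *: (outcome (sigReal dl (0%N, t0) sigS k c s) ms)`_l =
      \sum_(l < L) a l *: (sigReal dl (0%N, t0) sigS k c s (take l.+1 ms)).2.
    apply: eq_bigr => l _; rewrite /outcome (nth_map 0%N); last by rewrite size_iota.
    by rewrite nth_iota.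
  have e2 : \sum_(l < L) a l *: (mkseq z L)`_l = \sum_(l < L) a l *: z l.
    by apply: eq_bigr => l _; rewrite nth_mkseq.
  rewrite e1 e2.
  have [-> ->] := hreg a; exact: key.
pose dd := (0%N, (t0, 0%N)).
have hlegj : forall j, (j < SS dl L)%N ->
    [/\ spanF F [set g | g \in (Xj j).1] `<=`
          X `&` spanF F [set e i | i in [set i | ((nth dd sm j).1 < i)%N]],
        (Xj j).2 != 0
      & spanF F [set g | g \in flatten [seq (Xj i).1 | i <- iota 0 j.+1]] (Xj j).2].
  move=> j hj; have := hlegS (take j sm) (nth dd sm j) (drop j.+1 sm).
  have hsm : size sm = SS dl L by rewrite size_sim.
  rewrite size_takel; last (rewrite hsm; lia).
  apply; by rewrite -{1}(cat_take_drop j sm) (drop_nth dd) // hsm.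
have hnth : forall j, (j < SS dl L)%N -> (nth dd sm j).1 = (nth (0%N, t0) ms (rnd dl j)).1.
  by move=> j hj; rewrite nth_sim.
have hXc : forall A, A `<=` X -> spanF F A `<=` X.
  by rewrite hX => A hA; apply: spanF_sub.
have hEc : forall n A, A `<=` spanF F [set e i | i in [set i | (n < i)%N]] ->
    spanF F A `<=` spanF F [set e i | i in [set i | (n < i)%N]].
  by move=> n A hA; apply: spanF_sub.
move=> ms1 p ms2 E; cbv zeta.
have hl : (size ms1 < L)%N by rewrite /L E size_cat /=; lia.
have hp : p = nth (0%N, t0) ms (size ms1) by rewrite E nth_cat ltnn subnn.
set l := size ms1 in hl hp *.
split.
- rewrite hR1 // => v hv; split.
  + apply: (hXc _ _ _ hv) => g /flatten_mapP [j]; rewrite mem_iota => /andP[h1 h2] hg.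
    have hj : (j < SS dl L)%N by have := SS_mono dl hl; rewrite SS_S; lia.
    case: (hlegj j hj) => h _ _; have [] := h g (spanF_in hF hg) => //.
  + apply: (hEc _ _ _ _ hv) => g /flatten_mapP [j]; rewrite mem_iota => /andP[h1 h2] hg.
    have hj : (j < SS dl L)%N by have := SS_mono dl hl; rewrite SS_S; lia.
    case: (hlegj j hj) => h _ _; have [_] := h g (spanF_in hF hg).
    rewrite hnth // (@rnd_uniq _ dpos j l) -?hp //; rewrite SS_S; lia.
- apply/negP => /eqP h0.
  pose b := fun m : nat => ((m == l)%:R : R).
  have [_ h2] := key (Acoef b); have [e1 e2] := hreg b.
  rewrite -e1 -e2 /b in h2; cbv beta in h2.
  rewrite (sum_ind (fun m => (sigReal dl (0%N, t0) sigS k c s (take m.+1 ms)).2)) //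
    (sum_ind z) // h0 normr0 mulr0 normr_le0 in h2.
  by have [hz0 _ _] := hz l; rewrite h2 in hz0.
- rewrite hR2 //; apply: (@spanF_sum _ _ _ hF _ (k l) (c l) (fun i => (Xj (s l i)).2)) => i hi; split; first exact: hc.
  have hj := hsN l i hl hi.
  case: (hlegj _ hj) => _ _ h3.
  apply: (spanF_mono _ h3) => g /flatten_mapP [m]; rewrite mem_iota => /andP[_ hm] hg.
  have hsl := hs l i hi.
  have hmr : (rnd dl m < l.+1)%N by apply: rnd_lt => //; rewrite SS_S; lia.
  apply/flatten_mapP; exists (rnd dl m); first by rewrite mem_iota.
  rewrite hR1; last lia.
  apply/flatten_mapP; exists m => //; rewrite mem_iota.
  by have := rnd_spec dpos m; rewrite SS_S.
Qed.
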